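(* Assume the well-posedness and controllability assumptions below. For $\theta\in\mathcal{N}$ define $\ell_N(\theta):=\mathbb{E}\big[\ell(x_s^{\mathrm{bet}(\theta_{N-1})},\bar u_s^{\mathrm{bet}(\theta_{N-1}),\theta_N},\theta_N)\mid\theta_0=\theta\big]$, and for the closed-loop system $x_{k+1}=f(x_k,\kappa_N(x_k,\theta_k),\theta_k)$ define $\mathcal{L}V_N^\star(x_k,\theta_k):=\mathbb{E}[V_N^\star(x_{k+1},\theta_{k+1})-V_N^\star(x_k,\theta_k)\mid\mathfrak{F}_k]$. Then for all $(x_k,\theta_k)\in X_N$, $$\mathcal{L}V_N^\star(x_k,\theta_k)\le \ell_N(\theta_k)-\ell(x_k,\kappa_N(x_k,\theta_k),\theta_k).$$
   Context: Let $\mathcal{N}=\{1,\dots,\nu\}$ and let $\{\theta_k\}_{k\ge 0}$ be a time-homogeneous Markov chain on $\mathcal{N}$ with transition matrix $P=(p_{ij})$ and initial distribution $v$, defined on a filtered probability space $(\Omega,\mathfrak{F},\{\mathfrak{F}_k\}_k,\mathbb{P})$, where $\mathfrak{F}_k$ is the $\sigma$-algebra generated by the history of states, inputs and modes up to time $k$. The system is $x_{k+1}=f(x_k,u_k,\theta_k)$ with $x_k\in\mathbb{R}^n$, $u_k\in\mathbb{R}^m$; at time $k$ both $x_k$ and $\theta_k$ are measured. Constraints: $(x_k,u_k)\in Y_{\theta_k}$. Stage cost $\ell:\mathbb{R}^n\times\mathbb{R}^m\times\mathcal{N}\to\mathbb{R}$. $u\lhd\mathfrak{F}_k$ means $u$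 is $\mathfrak{F}_k$-measurable. Cover: $\mathcal{C}(i)=\{j: p_{ij}>0\}$; bet node: some $\mathrm{bet}(i)\in\mathcal{C}(i)$ with $p_{i\,\mathrm{bet}(i)}\ge p_{ij}$ for all $j\in\mathcal{C}(i)$. Well-posedness assumption: for each $\theta$, $\ell(\cdot,\cdot,\theta)$ is nonnegative, lower semicontinuous and level-bounded in $u$ locally uniformly in $x$; $f(\cdot,\cdot,\theta)$ is continuous; $Y_\theta$ is nonempty and compact; $\{\theta_k\}$ is irreducible and aperiodic. Optimal steady states: $(x_s^\theta,u_s^\theta)$ minimizes $\ell(x,u,\theta)$ subject to $f(x,u,\theta)=x$, $(x,u)\in Y_\theta$. Controllability assumption: for all $i,j\in\mathcal{N}$ there is $\bar u_s^{i,j}$ with $(x_s^i,\bar u_s^{i,j})\in Y_j$ and $f(x_s^i,\bar u_s^{i,j},j)=x_s^{\mathrm{bet}(j)}$. EMPC problem $\mathbb{P}(x,\theta)$: $V_N^\star(x,\theta)=\inf_{\mathbf{u}_N}\mathbb{E}[\sum_{j=0}^{N-1}\ell(x_j,u_j,\theta_j)\mid\mathfrak{F}_0]$ subject to, for $k=0,\dots,N-1$: $x_{k+1}=f(x_k,u_k,\theta_k)$, $(x_k,u_k)\in Y_{\theta_k}$, $(x_0,\theta_0)=(x,\theta)$, $x_N=x_s^{\mathrm{bet}(\theta_{N-1})}$, $u_k\lhd\mathfrak{F}_k$. $X_N$ is the set of $(x,\theta)$ for which it is feasible; $\kappa_N(x,\theta)=u_0^\star(x,\theta)$ is the first element of an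 optimal policy. *)

(* Defs.v *)
From HB Require Import structures.
From mathcomp Require Import all_boot all_order all_algebra.
From mathcomp Require Import all_classical all_reals all_analysis.
Set Implicit Arguments. Unset Strict Implicit. Unset Printing Implicit Defensive.
Import Order.TTheory GRing.Theory Num.Theory.
Import numFieldNormedType.Exports.
Local Open Scope classical_set_scope.
Local Open Scope ring_scope.

Section EMPC.
Variables (R : realType) (n m nu : nat).
Notation X := 'rV[R]_n.
Notation U := 'rV[R]_m.
Notation M := 'I_nu.

Definition stochastic (P : 'M[R]_nu) : Prop :=
  (forall i j, 0 <= P i j) /\ (forall i, \sum_j P i j = 1).

Definition irreducible (P : 'M[R]_nu) : Prop :=
  forall i j, exists k : nat, 0 < (P ^+ k) i j.

Definition aperiodic (P : 'M[R]_nu) : Prop :=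
  forall (i : M) (d : nat),
    (forall k : nat, (0 < k)%N -> 0 < (P ^+ k) i i -> (d %| k)%N) -> d = 1%N.

Definition is_bet (P : 'M[R]_nu) (bet : M -> M) : Prop :=
  forall i, 0 < P i (bet i) /\ forall j, 0 < P i j -> P i j <= P i (bet i).

(* level-bounded in u locally uniformly in x (Rockafellar-Wets Def. 1.16) *)
Definition level_bounded_loc_unif (g : X -> U -> R) : Prop :=
  forall (xb : X) (a : R), exists2 V : set X, nbhs xb V &
    exists2 B : set U, bounded_set B &
      forall x u, V x -> g x u <= a -> B u.

Definition well_posed (P : 'M[R]_nu) (f : X -> U -> M -> X)
    (l : X -> U -> M -> R) (Y : M -> set (X * U)) : Prop :=
  [/\ forall th,
        [/\ forall x u, 0 <= l x u th,
            lower_semicontinuous (fun p : X * U => (l p.1 p.2 th)%:E),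
            level_bounded_loc_unif (fun x u => l x u th),
            continuous (fun p : X * U => f p.1 p.2 th) &
            Y th !=set0 /\ compact (Y th)],
      irreducible P & aperiodic P].

Definition optimal_steady_states (f : X -> U -> M -> X) (l : X -> U -> M -> R)
    (Y : M -> set (X * U)) (xs : M -> X) (us : M -> U) : Prop :=
  forall th,
    [/\ f (xs th) (us th) th = xs th, Y th (xs th, us th) &
        forall x u, f x u th = x -> Y th (x, u) -> l (xs th) (us th) th <= l x u th].

Definition controllable (f : X -> U -> M -> X) (Y : M -> set (X * U))
    (bet : M -> M) (xs : M -> X) (ubar : M -> M -> U) : Prop :=
  forall i j, Y j (xs i, ubar i j) /\ f (xs i) (ubar i j) j = xs (bet j).

(* A causal (F_k-adapted) policy: the input at time k is a function of the
   mode history [:: th_0; ...; th_k] (the state x_k being determined by the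
   initial state and this history). *)
Definition policy := seq M -> U.

(* State reached from x after applying policy u along the mode history h,
   pre being the part of the history already elapsed. *)
Fixpoint stt (f : X -> U -> M -> X) (u : policy) (pre : seq M) (x : X)
    (h : seq M) : X :=
  match h with
  | [::] => x
  | th :: h' => stt f u (rcons pre th) (f x (u (rcons pre th)) th) h'
  end.

(* x_k along the full mode path h = [:: th_0; ...] *)
Definition xk f (u : policy) (x : X) (h : seq M) (k : nat) : X :=
  stt f u [::] x (take k h).
Definition uk (u : policy) (h : seq M) (k : nat) : U := u (take k.+1 h).

(* probability of the mode path th_1 ... th_r given th_0 = i *)
Fixpoint pathprob (P : 'M[R]_nu) (i : M) (s : seq M) : R :=
  match s with
  | [::] => 1
  | j :: s' => P i j * pathprob P j s'
  end.

(* Feasibility for P(x,th): constraints hold almost surely, i.e. along every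
   mode path th_0 = th, th_1, ..., th_{N-1} of positive probability. *)
Definition feasible (N : nat) P f (Y : M -> set (X * U)) (bet : M -> M)
    (xs : M -> X) (x : X) (th : M) (u : policy) : Prop :=
  forall t : (N.-1).-tuple M, 0 < pathprob P th t ->
    let h := th :: tval t in
    (forall k, (k < N)%N -> Y (nth th h k) (xk f u x h k, uk u h k)) /\
    xk f u x h N = xs (bet (last th t)).

Definition cost (N : nat) P f l (x : X) (th : M) (u : policy) : R :=
  \sum_(t : (N.-1).-tuple M)
     pathprob P th t *
       (let h := th :: tval t in
        \sum_(k < N) l (xk f u x h k) (uk u h k) (nth th h k)).

Definition VN (N : nat) P f l Y bet xs (x : X) (th : M) : R :=
  inf [set cost N P f l x th u | u in feasible N P f Y bet xs x th].

Definition XN (N : nat) P f (Y : M -> set (X * U)) bet xs : set (X * M) :=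
  [set p | exists u, feasible N P f Y bet xs p.1 p.2 u].

Definition is_mpc_law (N : nat) P f l Y bet xs (kappa : X -> M -> U) : Prop :=
  forall x th, XN N P f Y bet xs (x, th) ->
    exists u, [/\ feasible N P f Y bet xs x th u,
                 cost N P f l x th u = VN N P f l Y bet xs x th &
                 kappa x th = u [:: th]].

Definition lN (N : nat) (P : 'M[R]_nu) l (bet : M -> M) (xs : M -> X)
    (ubar : M -> M -> U) (th : M) : R :=
  \sum_(a : M) \sum_(b : M)
     (P ^+ N.-1) th a * P a b * l (xs (bet a)) (ubar (bet a) b) b.

Definition LVN (N : nat) (P : 'M[R]_nu) (f : X -> U -> M -> X) (l : X -> U -> M -> R) (Y : M -> set (X * U)) (bet : M -> M) (xs : M -> X) (kappa : X -> M -> U) (x : X) (th : M) : R :=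
  \sum_(j : M) P th j *
     (VN N P f l Y bet xs (f x (kappa x th) th) j - VN N P f l Y bet xs x th).

End EMPC.

(* Main.v *)
Require Import Defs.
From HB Require Import structures.
From mathcomp Require Import all_boot all_order all_algebra.
From mathcomp Require Import all_classical all_reals all_analysis.
Import Order.TTheory GRing.Theory Num.Theory.
Local Open Scope classical_set_scope.
Local Open Scope ring_scope.
Set Implicit Arguments.

Section Esum.
Variables (R : realType) (nu : nat) (P : 'M[R]_nu).

Definition E (k : nat) (i : 'I_nu) (g : seq 'I_nu -> R) : R :=
  \sum_(t : k.-tuple 'I_nu) pathprob P i t * g t.

Lemma E0 i g : E 0 i g = g [::].
Proof.
rewrite /E (big_pred1 [tuple]) /=; first by rewrite mul1r.
by move=> t /=; rewrite [t]tuple0; apply/esym/eqP.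
Qed.

Lemma E1 k i g : E k.+1 i g = \sum_j P i j * E k j (fun t => g (j :: t)).
Proof.
rewrite /E (reindex (fun p : 'I_nu * k.-tuple 'I_nu => [tuple of p.1 :: p.2])) /=.
  rewrite -(pair_bigA _ (fun (j : 'I_nu) (t : k.-tuple 'I_nu) => pathprob P i [tuple of j :: t] * g (j :: t))) /=.
  apply: eq_bigr => j _; rewrite big_distrr /=.
  by apply: eq_bigr => t _; rewrite mulrA.
exists (fun t : k.+1.-tuple 'I_nu => (thead t, [tuple of behead t])).
  by move=> [j t] _ /=; congr pair; apply: val_inj.
by move=> t _; rewrite [RHS]tuple_eta.
Qed.

Lemma pathprob_ge0 (sP : stochastic P) i s : 0 <= pathprob P i s.
Proof.
elim: s i => [|j s IH] i /=; first exact: ler01.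
by apply: mulr_ge0; [exact: sP.1 | exact: IH].
Qed.

Lemma Econg k i g g' :
  (forall s : seq 'I_nu, size s = k -> 0 < pathprob P i s -> g s = g' s) ->
  (stochastic P) -> E k i g = E k i g'.
Proof.
move=> H sP; apply: eq_bigr => t _.
have := pathprob_ge0 sP i t; rewrite le0r => /orP[/eqP->|hp]; first by rewrite !mul0r.
by rewrite H // size_tuple.
Qed.

Lemma Eadd k i g g' : E k i (fun s => g s + g' s) = E k i g + E k i g'.
Proof. by rewrite /E -big_split /=; apply: eq_bigr => t _; rewrite mulrDr. Qed.

Lemma Econst (sP : stochastic P) k i c : E k i (fun _ => c) = c.
Proof.
elim: k i => [|k IH] i; first by rewrite E0.
rewrite E1; under eq_bigr do rewrite IH.
by rewrite -big_distrl /= sP.2 mul1r.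
Qed.

Lemma Erem (sP : stochastic P) k i g g' :
  (forall s b, size s = k -> g (rcons s b) = g' s) -> E k.+1 i g = E k i g'.
Proof.
elim: k i g g' => [|k IH] i g g' H.
  rewrite E1 E0; under eq_bigr do rewrite E0 (H [::]) //.
  by rewrite -big_distrl /= sP.2 mul1r.
rewrite E1 [RHS]E1; apply: eq_bigr => j _; congr (_ * _).
by apply: IH => s b Hs; rewrite (H (j :: s)) //= Hs.
Qed.

Lemma Elast k i (H : 'I_nu -> 'I_nu -> R) :
  E k.+1 i (fun s => H (last i (take k s)) (last i s)) =
  \sum_a \sum_b (P ^+ k) i a * P a b * H a b.
Proof.
elim: k i => [|k IH] i.
  rewrite E1 expr0; under eq_bigr do rewrite E0 /=.
  rewrite [RHS](bigD1 i) //= [X in _ + X]big1 ?addr0.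
    by apply: eq_bigr => b _; rewrite mxE eqxx mul1r.
  move=> a /negbTE ha; apply: big1 => b _.
  by rewrite mxE eq_sym ha mul0r mul0r.
rewrite E1; under eq_bigr do rewrite /= IH.
rewrite exprS -mulmxE.
under [RHS]eq_bigr do under eq_bigr do rewrite mxE big_distrl /= big_distrl /=.
under [RHS]eq_bigr do rewrite exchange_big /=.
rewrite [RHS]exchange_big /=; apply: eq_bigr => j _.
rewrite big_distrr /=; apply: eq_bigr => a _.
rewrite big_distrr /=; apply: eq_bigr => b _.
by rewrite !mulrA.
Qed.

End Esum.
Arguments E {R nu}.
Arguments Elast {R nu}.
Arguments E0 {R nu}.
Arguments E1 {R nu}.
Arguments Eadd {R nu}.

Lemma pathprob_rcons (R : realType) nu (P : 'M[R]_nu) i s b :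
  pathprob P i (rcons s b) = pathprob P i s * P (last i s) b.
Proof. by elim: s i => [|j s IH] i /=; rewrite ?mul1r ?mulr1 // IH mulrA. Qed.

Lemma stt_shift (R : realType) n m nu (f : 'rV[R]_n -> 'rV[R]_m -> 'I_nu -> 'rV[R]_n)
  (u v : policy R m nu) th N :
  (forall h, (size h < N)%N -> v h = u (th :: h)) ->
  forall pre y h, (size pre + size h < N)%N -> stt f v pre y h = stt f u (th :: pre) y h.
Proof.
move=> Hv pre y h; elim: h pre y => [|a h IH] pre y //= Hs.
rewrite Hv; last by rewrite size_rcons; move: Hs; rewrite addnS => /(leq_trans _)->//; rewrite ltnS leq_addr.
by rewrite IH // size_rcons addSn -addnS.
Qed.

Lemma stt_rcons (R : realType) n m nu (f : 'rV[R]_n -> 'rV[R]_m -> 'I_nu -> 'rV[R]_n)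
  (w : policy R m nu) pre y h a :
  stt f w pre y (rcons h a) = f (stt f w pre y h) (w (pre ++ rcons h a)) a.
Proof.
elim: h pre y => [|c h IH] pre y /=; first by rewrite cats1.
by rewrite IH cat_rcons.
Qed.

Theorem lemma1 (R : realType) (n m nu N : nat)
  (P : 'M[R]_nu) (f : 'rV[R]_n -> 'rV[R]_m -> 'I_nu -> 'rV[R]_n)
  (l : 'rV[R]_n -> 'rV[R]_m -> 'I_nu -> R) (Y : 'I_nu -> set ('rV[R]_n * 'rV[R]_m))
  (bet : 'I_nu -> 'I_nu) (xs : 'I_nu -> 'rV[R]_n) (us : 'I_nu -> 'rV[R]_m)
  (ubar : 'I_nu -> 'I_nu -> 'rV[R]_m) (kappa : 'rV[R]_n -> 'I_nu -> 'rV[R]_m) :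
  (0 < N)%N ->
  stochastic P -> is_bet P bet ->
  well_posed P f l Y ->
  optimal_steady_states f l Y xs us ->
  controllable f Y bet xs ubar ->
  is_mpc_law N P f l Y bet xs kappa ->
  forall (x : 'rV[R]_n) (th : 'I_nu), XN N P f Y bet xs (x, th) ->
    LVN N P f l Y bet xs kappa x th <= lN N P l bet xs ubar th - l x (kappa x th) th.
Proof.
case: N => [//|N'] _ sP _ Hwp _ Hctrl Hmpc x th HX.
have l0 : forall x u t, 0 <= l x u t.
  by move=> x' u' t; case: Hwp => Hth _ _; have [H0 _ _ _ _] := Hth t; exact: H0.
have [u [Hfeas Hcost Hk]] := Hmpc x th HX.
pose xp := f x (kappa x th) th.
pose v : policy R m nu := fun h => if (size h < N'.+1)%N then u (th :: h)
   else ubar (bet (last th (take N' h))) (last th h).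
have Hv : forall h, (size h < N'.+1)%N -> v h = u (th :: h) by move=> h hh; rewrite /v hh.
have feas_seq : forall s : seq 'I_nu, size s = N' -> 0 < pathprob P th s ->
   (forall k, (k < N'.+1)%N -> Y (nth th (th::s) k) (xk f u x (th::s) k, uk u (th::s) k)) /\
   xk f u x (th::s) N'.+1 = xs (bet (last th s)).
  by move=> s Hs Hp; exact: (Hfeas (Tuple (introT eqP Hs)) Hp).
have takeN : forall (s0 : seq 'I_nu) (b : 'I_nu) k, size s0 = N' -> (k <= N')%N -> take k (rcons s0 b) = take k s0.
  by move=> s0 b k Hs hk; rewrite -cats1 takel_cat // Hs.
have Lx : forall (s0 : seq 'I_nu) (b : 'I_nu) k, size s0 = N' -> (k <= N')%N ->
    xk f v xp (rcons s0 b) k = xk f u x (th::s0) k.+1.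
  move=> s0 b k Hs hk; rewrite /xk takeN //= /xp Hk.
  by rewrite (stt_shift f u v th N'.+1 Hv) //= size_takel ?Hs.
have Lu : forall (s0 : seq 'I_nu) (b : 'I_nu) k, size s0 = N' -> (k < N')%N ->
    uk v (rcons s0 b) k = uk u (th::s0) k.+1.
  move=> s0 b k Hs hk; rewrite /uk takeN //= Hv // size_takel ?Hs //.
have Lu' : forall (s0 : seq 'I_nu) (b : 'I_nu), size s0 = N' -> uk v (rcons s0 b) N' = ubar (bet (last th s0)) b.
  move=> s0 b Hs; rewrite /uk take_oversize ?size_rcons ?Hs //.
  by rewrite /v size_rcons Hs ltnn takeN // take_oversize ?Hs // last_rcons.
have Ln : forall (d : 'I_nu) (s0 : seq 'I_nu) (b : 'I_nu) k, size s0 = N' -> (k < N')%N ->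
    nth d (rcons s0 b) k = nth th (th::s0) k.+1.
  by move=> d s0 b k Hs hk /=; rewrite nth_rcons Hs hk; apply: set_nth_default; rewrite Hs.
have Ln' : forall (d : 'I_nu) (s0 : seq 'I_nu) (b : 'I_nu), size s0 = N' -> nth d (rcons s0 b) N' = b.
  by move=> d s0 b Hs; rewrite nth_rcons Hs ltnn eqxx.
have Lterm : forall (s0 : seq 'I_nu) (b : 'I_nu), size s0 = N' ->
    xk f v xp (rcons s0 b) N'.+1 = f (xk f u x (th::s0) N'.+1) (ubar (bet (last th s0)) b) b.
  move=> s0 b Hs; rewrite -(Lx s0 b) //.
  rewrite /xk take_oversize ?size_rcons ?Hs // stt_rcons /= takeN // take_oversize ?Hs //.
  by rewrite /v size_rcons Hs ltnn takeN // take_oversize ?Hs // last_rcons.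
have prefix : forall (s0 : seq 'I_nu) (b : 'I_nu), 0 < pathprob P th (rcons s0 b) -> 0 < pathprob P th s0.
  move=> s0 b; rewrite pathprob_rcons.
  have := pathprob_ge0 sP th s0; rewrite le0r => /orP[/eqP->|//].
  by rewrite mul0r ltxx.
have vfeas : forall s : seq 'I_nu, size s = N'.+1 -> 0 < pathprob P th s ->
   (forall k, (k < N'.+1)%N -> Y (nth (head th s) s k) (xk f v xp s k, uk v s k)) /\
   xk f v xp s N'.+1 = xs (bet (last th s)).
  case/lastP => [//|s0 b]; rewrite size_rcons => /eqP; rewrite eqSS => /eqP Hs Hp.
  have [Fk Ft] := feas_seq s0 Hs (prefix _ _ Hp).
  split.
    move=> k; rewrite ltnS leq_eqVlt => /orP[/eqP->|hk].
      by rewrite Ln' // Lx // Ft Lu' //; exact: (Hctrl _ _).1.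
    by rewrite Ln // Lx ?(ltnW hk) // Lu //; exact: Fk.
  by rewrite Lterm // Ft last_rcons; exact: (Hctrl _ _).2.
have Hj : forall j, P th j * VN N'.+1 P f l Y bet xs xp j <= P th j * cost N'.+1 P f l xp j v.
  move=> j; have := sP.1 th j; rewrite le0r => /orP[/eqP->|hp]; first by rewrite !mul0r.
  rewrite ler_pM2l //.
  have hl : has_lbound [set cost N'.+1 P f l xp j w | w in feasible N'.+1 P f Y bet xs xp j].
    exists 0 => _ [w _ <-]; apply: sumr_ge0 => t _; apply: mulr_ge0.
      exact: pathprob_ge0.
    by apply: sumr_ge0 => k _; exact: l0.
  have Hl := ge_inf hl; rewrite /lbound /= in Hl.
  rewrite /VN; apply: Hl; exists v => //.
  move=> t Hp; apply: (vfeas (j :: tval t)); first by rewrite /= size_tuple.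
  by rewrite /= mulr_gt0.
pose G := fun s : seq 'I_nu => \sum_(k < N'.+1) l (xk f v xp s k) (uk v s k) (nth (head th s) s k).
pose A' := fun t : seq 'I_nu => \sum_(k < N') l (xk f u x (th::t) k.+1) (uk u (th::t) k.+1) (nth th (th::t) k.+1).
pose Hf := fun a b => l (xs (bet a)) (ubar (bet a) b) b.
have Hc : \sum_j P th j * cost N'.+1 P f l xp j v = E P N'.+1 th G.
  by rewrite E1.
have HG : E P N'.+1 th G = E P N'.+1 th (fun s => A' (take N' s) + Hf (last th (take N' s)) (last th s)).
  apply: Econg => //; case/lastP => [//|s0 b]; rewrite size_rcons => /eqP; rewrite eqSS => /eqP Hs Hp.
  have [Fk Ft] := feas_seq s0 Hs (prefix _ _ Hp).
  rewrite takeN // take_oversize ?Hs // last_rcons /G big_ord_recr.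
  congr (_ + _).
    apply: eq_bigr => k _.
    by rewrite (Ln _ s0 b k Hs (ltn_ord k)) (Lx s0 b k Hs (ltnW (ltn_ord k))) (Lu s0 b k Hs (ltn_ord k)).
  by rewrite (Ln' _ s0 b Hs) (Lx s0 b N' Hs (leqnn _)) Ft (Lu' s0 b Hs).
have HV0 : cost N'.+1 P f l x th u = E P N' th (fun t => l x (kappa x th) th + A' t).
  rewrite /cost /E; apply: eq_bigr => t _; congr (_ * _).
  rewrite big_ord_recl Hk; congr (_ + _).
  have e2 : uk u (th :: t) 0 = u [:: th] by rewrite /uk /= take0.
  by rewrite e2.
have HA : E P N'.+1 th (fun s => A' (take N' s)) = E P N' th A'.
  by apply: Erem => // s b Hs; rewrite takeN // take_oversize ?Hs.
rewrite /LVN; under eq_bigr do rewrite mulrBr.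
rewrite sumrB -big_distrl /= sP.2 mul1r.
apply: (le_trans (lerB (ler_sum _ (fun j _ => Hj j)) (lexx _))).
rewrite Hc HG Eadd HA Elast -Hcost HV0 Eadd Econst //.
rewrite (addrC (E P N' th A')) (addrC (l x (kappa x th) th)) addrKA.
exact: lexx.
Qed.
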